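(* Let $\lambda_1,\lambda_2,\sigma_1,\sigma_2\in\mathbb{C}^*$ and $\eta_1,\eta_2\in\mathbb{C}$ with $\lambda_1\neq\lambda_2$. Then the $\mathcal{G}$-submodule of $\Omega(\lambda_1,\eta_1,\sigma_1,0)\otimes\Omega(\lambda_2,\eta_2,\sigma_2,0)$ generated by $1\otimes 1$ is the whole module $\Omega(\lambda_1,\eta_1,\sigma_1,0)\otimes\Omega(\lambda_2,\eta_2,\sigma_2,0)$.
   Context: The planar Galilean conformal algebra $\mathcal{G}$ is the complex Lie algebra with basis $\{L_m,H_m,I_m,J_m\mid m\in\mathbb{Z}\}$ and brackets $[L_m,L_n]=(n-m)L_{m+n}$, $[L_m,H_n]=nH_{m+n}$, $[L_m,I_n]=(n-m)I_{m+n}$, $[L_m,J_n]=(n-m)J_{m+n}$, $[H_m,I_n]=I_{m+n}$, $[H_m,J_n]=-J_{m+n}$, and $[H_m,H_n]=[I_m,I_n]=[J_m,J_n]=[I_m,J_n]=0$ for all $m,n\in\mathbb{Z}$. For $\lambda,\sigma\in\mathbb{C}^*$, $\eta\in\mathbb{C}$, the module $\Omega(\lambda,\eta,\sigma,0)$ is a polynomial algebra $\mathbb{C}[X,Y]$ with $L_m f(X,Y)=\lambda^m(Y-mX+m\eta)f(X,Y-m)$, $H_m f(X,Y)=\lambda^m X f(X,Y-m)$, $I_m f(X,Y)=\lambda^m\sigma f(X-1,Y-m)$, $J_m f(X,Y)=0$. The tensor product of $\mathcal{G}$-modules has action $x(v\otimes w)=xv\otimes w+v\otimes xw$. *)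

(* Defs.v *)
From mathcomp Require Import all_boot all_order all_algebra.
From mathcomp Require Import reals.
From mathcomp.real_closed Require Import complex.
From mathcomp Require Import mpoly.

Set Implicit Arguments.
Unset Strict Implicit.
Unset Printing Implicit Defensive.
Import GRing.Theory.
Local Open Scope ring_scope.

(* The four families of basis elements of the planar Galilean conformal
   algebra: L_m, H_m, I_m, J_m (m : int). *)
Inductive Ggen := GL | GH | GI | GJ.

Section TensorOmega.
Variable R : realType.
Local Notation C := (R[i]).

(* Model of Omega(l1,e1,s1,0) (x) Omega(l2,e2,s2,0):
   C[X,Y] (x) C[X,Y] = C[X1,Y1,X2,Y2] via f (x) g |-> f(X1,Y1) g(X2,Y2),
   with variables 'X_0 = X1, 'X_1 = Y1, 'X_2 = X2, 'X_3 = Y2. *)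
Definition TOmega := {mpoly C[4]}.

Definition shift1 (a b : C) (f : TOmega) : TOmega :=
  f \mPo [tuple ('X_0 - a%:MP : TOmega); 'X_1 - b%:MP; 'X_2; 'X_3].
Definition shift2 (a b : C) (f : TOmega) : TOmega :=
  f \mPo [tuple ('X_0 : TOmega); 'X_1; 'X_2 - a%:MP; 'X_3 - b%:MP].

Variables (l1 e1 s1 l2 e2 s2 : C).

(* Action of x_m on the tensor product: x (f (x) g) = x f (x) g + f (x) x g,
   where on Omega(l,e,s,0):
     L_m f = l^m (Y - m X + m e) f(X, Y - m)
     H_m f = l^m X f(X, Y - m)
     I_m f = l^m s f(X - 1, Y - m)
     J_m f = 0. *)
Definition tact (x : Ggen) (m : int) (f : TOmega) : TOmega :=
  let mC : C := m%:~R in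
  match x with
  | GL => l1 ^ m *: (('X_1 - mC *: 'X_0 + (mC * e1)%:MP) * shift1 0 mC f)
        + l2 ^ m *: (('X_3 - mC *: 'X_2 + (mC * e2)%:MP) * shift2 0 mC f)
  | GH => l1 ^ m *: ('X_0 * shift1 0 mC f) + l2 ^ m *: ('X_2 * shift2 0 mC f)
  | GI => (l1 ^ m * s1) *: shift1 1 mC f + (l2 ^ m * s2) *: shift2 1 mC f
  | GJ => 0
  end.

Definition is_Gsubmodule (W : TOmega -> Prop) : Prop :=
  [/\ W 0,
      (forall (a : C) (u v : TOmega), W u -> W v -> W (a *: u + v)) &
      (forall (x : Ggen) (m : int) (u : TOmega), W u -> W (tact x m u))].

Definition in_generated_submodule (w v : TOmega) : Prop :=
  forall W : TOmega -> Prop, is_Gsubmodule W -> W w -> W v.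

Definition tens (f g : {mpoly C[2]}) : TOmega :=
  (f \mPo [tuple ('X_0 : TOmega); 'X_1]) * (g \mPo [tuple ('X_2 : TOmega); 'X_3]).

End TensorOmega.

(* Main.v *)
Require Import Defs.
From mathcomp Require Import all_boot all_order all_algebra.
From mathcomp Require Import reals.
From mathcomp.real_closed Require Import complex.
From mathcomp Require Import mpoly.
From mathcomp Require Import ring zify.
Import GRing.Theory.
Local Open Scope ring_scope.

Section S.
Variable R : realType.
Local Notation C := (R[i]).
Local Notation T := (TOmega R).

Definition mono (a b c d : nat) : T :=
  'X_0 ^+ a * 'X_1 ^+ b * 'X_2 ^+ c * 'X_3 ^+ d.

Lemma shift1_mono t a b c d : shift1 0 t (mono a b c d) =
  'X_0 ^+ a * ('X_1 - t%:MP) ^+ b * 'X_2 ^+ c * 'X_3 ^+ d.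
Proof.
rewrite /shift1 /mono !rmorphM !rmorphXn /= !comp_mpolyXU /=.
by rewrite mpolyC0 subr0.
Qed.

Lemma shift2_mono t a b c d : shift2 0 t (mono a b c d) =
  'X_0 ^+ a * 'X_1 ^+ b * 'X_2 ^+ c * ('X_3 - t%:MP) ^+ d.
Proof.
rewrite /shift2 /mono !rmorphM !rmorphXn /= !comp_mpolyXU /=.
by rewrite mpolyC0 subr0.
Qed.

Definition coef (t : C) b (i : nat) : C := (- t) ^+ (b - i) *+ 'C(b, i).

Lemma expand (j : 'I_4) t b : ('X_j - t%:MP : T) ^+ b =
  'X_j ^+ b + \sum_(i < b) coef t b i *: 'X_j ^+ i.
Proof.
rewrite addrC exprDn big_ord_recr /= subnn expr0 mul1r binn mulr1n addrC.
congr (_ + _); apply: eq_bigr => i _.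
by rewrite /coef -mul_mpolyC rmorphMn rmorphXn raddfN /= mulrnAl.
Qed.

Lemma tens11 : tens 1 1 = 1 :> T.
Proof. by rewrite /tens !rmorph1 mulr1. Qed.


Lemma shift1_exp t a b c d : shift1 0 t (mono a b c d) =
  mono a b c d + \sum_(i < b) coef t b i *: mono a i c d.
Proof.
rewrite shift1_mono (expand 1) mulrDr mulrDl mulrDl /mono; congr (_ + _).
rewrite mulr_sumr !mulr_suml; apply: eq_bigr => i _.
by rewrite -scalerAr !scalerAl.
Qed.

Lemma shift2_exp t a b c d : shift2 0 t (mono a b c d) =
  mono a b c d + \sum_(i < d) coef t d i *: mono a b c i.
Proof.
rewrite shift2_mono (expand 3) mulrDr /mono; congr (_ + _).
rewrite mulr_sumr; apply: eq_bigr => i _.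
by rewrite -scalerAr.
Qed.

Variables (l1 e1 s1 l2 e2 s2 : C) (W : T -> Prop).
Hypothesis HW : is_Gsubmodule l1 e1 s1 l2 e2 s2 W.
Hypothesis Hl : l1 != l2.
Hypothesis W1 : W 1.

Lemma W0 : W 0. Proof. by case: HW. Qed.
Lemma WZD a u v : W u -> W v -> W (a *: u + v). Proof. by case: HW => _ h _; apply: h. Qed.
Lemma Wact x m u : W u -> W (tact l1 e1 s1 l2 e2 s2 x m u).
Proof. by case: HW => _ _ h; apply: h. Qed.
Lemma WZ a u : W u -> W (a *: u).
Proof. by move=> h; rewrite -[_ *: _]addr0; apply: WZD h W0. Qed.
Lemma WD u v : W u -> W v -> W (u + v).
Proof. by move=> h1 h2; rewrite -[u]scale1r; apply: WZD. Qed.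
Lemma WB u v : W u -> W v -> W (u - v).
Proof. by move=> h1 h2; apply: WD h1 _; rewrite -scaleN1r; apply: WZ. Qed.
Lemma Wsum k (F : 'I_k -> T) : (forall i, W (F i)) -> W (\sum_(i < k) F i).
Proof. by move=> h; apply: (big_ind W W0 WD). Qed.
Lemma WC (x : C) u : W u -> W (x%:MP * u).
Proof. by rewrite mul_mpolyC; apply: WZ. Qed.

Arguments WD {u v}. Arguments WB {u v}. Arguments WZ a {u}. Arguments WZD a {u v}.
Arguments WC x {u}. Arguments Wact x m {u}. Arguments Wsum {k F}.

Lemma sep A B : W (A + B) -> W (l1 *: A + l2 *: B) -> W A /\ W B.
Proof.
move=> h1 h2.
have d0 : l1 - l2 != 0 by rewrite subr_eq0.
have hA : W ((l1 - l2) *: A).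
  have -> : (l1 - l2) *: A = (l1 *: A + l2 *: B) - l2 *: (A + B).
    by rewrite scalerDr scalerBl opprD addrACA subrr addr0.
  by apply: WB => //; apply: WZ.
have WA : W A.
  by have := WZ (l1 - l2)^-1 hA; rewrite scalerA mulVf // scale1r.
split => //.
by have := WB h1 WA; rewrite addrC addKr.
Qed.

Lemma Wbase a c : W (mono a 0 c 0).
Proof.
have Hstep : forall a c, W (mono a 0 c 0) ->
    W ('X_0 * mono a 0 c 0) /\ W ('X_2 * mono a 0 c 0).
  move=> a' c' Hu.
  have h0 := Wact GH 0 Hu; have h1 := Wact GH 1 Hu.
  rewrite /tact !shift1_exp !shift2_exp !big_ord0 !addr0 in h0 h1.
  rewrite !expr0z !scale1r in h0.
  rewrite !expr1z in h1.
  exact: sep.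
elim: a => [|a IHa].
  elim: c => [|c IHc].
    have -> : mono 0 0 0 0 = 1 by rewrite /mono !expr0 !mulr1.
    exact: W1.
  have -> : mono 0 0 c.+1 0 = 'X_2 * mono 0 0 c 0 by rewrite /mono !exprS; ring.
  by case: (Hstep _ _ IHc).
have -> : mono a.+1 0 c 0 = 'X_0 * mono a 0 c 0 by rewrite /mono !exprS; ring.
by case: (Hstep _ _ IHa).
Qed.


Lemma WsumZM k (cf : nat -> C) (F : nat -> T) (p : T) :
  (forall i : 'I_k, W (p * F i)) -> W (p * \sum_(i < k) cf i *: F i).
Proof.
move=> h; rewrite mulr_sumr; apply: Wsum => i.
by rewrite -scalerAr; apply: WZ.
Qed.

Lemma WsumZ k (cf : nat -> C) (F : nat -> T) :
  (forall i : 'I_k, W (F i)) -> W (\sum_(i < k) cf i *: F i).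
Proof.
move=> h; rewrite -[X in W X]mul1r; apply: WsumZM => i; rewrite mul1r; exact: h.
Qed.

Lemma monoX0 a b c d : 'X_0 * mono a b c d = mono a.+1 b c d.
Proof. by rewrite /mono exprS; ring. Qed.
Lemma monoX1 a b c d : 'X_1 * mono a b c d = mono a b.+1 c d.
Proof. by rewrite /mono exprS; ring. Qed.
Lemma monoX2 a b c d : 'X_2 * mono a b c d = mono a b c.+1 d.
Proof. by rewrite /mono exprS; ring. Qed.
Lemma monoX3 a b c d : 'X_3 * mono a b c d = mono a b c d.+1.
Proof. by rewrite /mono exprS; ring. Qed.

Lemma Wstep n : (forall a b c d, (b + d <= n)%N -> W (mono a b c d)) ->
  forall a b c d, (b + d <= n.+1)%N -> W (mono a b c d).
Proof.
move=> Q.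
have key : forall a b c d, (b + d <= n)%N ->
    W ('X_1 * mono a b c d) /\ W ('X_3 * mono a b c d).
  move=> a b c d Hbd.
  have Wu := Q a b c d Hbd.
  have h0 := Wact GL 0 Wu; have h1 := Wact GL 1 Wu.
  rewrite /tact /= ?mulr0z ?mulr1z in h0 h1.
  have s10 : shift1 0 0 (mono a b c d) = mono a b c d by rewrite shift1_mono mpolyC0 subr0.
  have s20 : shift2 0 0 (mono a b c d) = mono a b c d by rewrite shift2_mono mpolyC0 subr0.
  rewrite s10 s20 !expr0z !scale1r !scale0r !mul0r mpolyC0 !subr0 !addr0 in h0.
  rewrite !shift1_exp !shift2_exp !expr1z !scale1r !mul1r in h1.
  set u := mono a b c d in h0 h1 *.
  set G1 := \sum_(i < b) _ in h1.
  set G2 := \sum_(i < d) _ in h1.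
  have WX0u : W ('X_0 * u) by rewrite monoX0; apply: Q.
  have WX2u : W ('X_2 * u) by rewrite monoX2; apply: Q.
  have WG1 : W G1 by apply: (@WsumZ _ _ (fun i => mono a i c d)) => i; apply: Q; have := ltn_ord i; lia.
  have WG2 : W G2 by apply: (@WsumZ _ _ (fun i => mono a b c i)) => i; apply: Q; have := ltn_ord i; lia.
  have WX0G1 : W ('X_0 * G1).
    by apply: (@WsumZM _ _ (fun i => mono a i c d)) => i; rewrite monoX0; apply: Q; have := ltn_ord i; lia.
  have WX1G1 : W ('X_1 * G1).
    by apply: (@WsumZM _ _ (fun i => mono a i c d)) => i; rewrite monoX1; apply: Q; have := ltn_ord i; lia.
  have WX2G2 : W ('X_2 * G2).
    by apply: (@WsumZM _ _ (fun i => mono a b c i)) => i; rewrite monoX2; apply: Q; have := ltn_ord i; lia.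
  have WX3G2 : W ('X_3 * G2).
    by apply: (@WsumZM _ _ (fun i => mono a b c i)) => i; rewrite monoX3; apply: Q; have := ltn_ord i; lia.
  set P1 := (_ * (u + G1)) in h1.
  set P2 := (_ * (u + G2)) in h1.
  have WD1 : W (P1 - 'X_1 * u).
    have -> : P1 - 'X_1 * u = 'X_1 * G1 - 'X_0 * u - 'X_0 * G1 + e1%:MP * u + e1%:MP * G1.
      by rewrite /P1; ring.
    by apply: WD; [apply: WD; [apply: WB; [apply: WB|]|apply: WC]|apply: WC].
  have WD2 : W (P2 - 'X_3 * u).
    have -> : P2 - 'X_3 * u = 'X_3 * G2 - 'X_2 * u - 'X_2 * G2 + e2%:MP * u + e2%:MP * G2.
      by rewrite /P2; ring.
    by apply: WD; [apply: WD; [apply: WB; [apply: WB|]|apply: WC]|apply: WC].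
  apply: sep => //.
  have -> : l1 *: ('X_1 * u) + l2 *: ('X_3 * u) =
     (l1 *: P1 + l2 *: P2) - (l1 *: (P1 - 'X_1 * u) + l2 *: (P2 - 'X_3 * u)).
    by rewrite -!mul_mpolyC; ring.
  by apply: WB => //; apply: WD; apply: WZ.
move=> a b c d H.
case: (leqP (b + d) n) => [|Hlt]; first exact: Q.
case: b H Hlt => [|b] H Hlt.
  case: d H Hlt => [|d] H Hlt; first by [].
  rewrite -monoX3; by case: (key a 0%N c d ltac:(lia)).
rewrite -monoX1; by case: (key a b c d ltac:(lia)).
Qed.

Lemma Wall v : W v.
Proof.
have Q : forall n a b c d, (b + d <= n)%N -> W (mono a b c d).
  elim=> [|n IH] a b c d H.
    have [-> ->] : b = 0%N /\ d = 0%N by lia.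
    exact: Wbase.
  exact: (Wstep n IH a b c d H).
rewrite {1}(mpolyE v); apply: (big_ind W W0 (@WD)) => m _; apply: WZ.
rewrite mpolyXE_id !big_ord_recl big_ord0 mulr1 /=.
have := Q _ (m ord0) (m (lift ord0 ord0)) (m (lift ord0 (lift ord0 ord0)))
  (m (lift ord0 (lift ord0 (lift ord0 ord0)))) (leqnn _).
rewrite /mono -!mulrA.
exact.
Qed.
End S.

Theorem proposition4p3 (R : realType) (l1 l2 s1 s2 e1 e2 : R[i]) :
  l1 != 0 -> l2 != 0 -> s1 != 0 -> s2 != 0 -> l1 != l2 ->
  forall v : TOmega R,
    in_generated_submodule l1 e1 s1 l2 e2 s2 (tens 1 1) v.
Proof.
move=> _ _ _ _ Hl v W HW Hw.
rewrite tens11 in Hw.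
exact: (@Wall R l1 e1 s1 l2 e2 s2 W HW Hl Hw v).
Qed.
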